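(* Let $\overline{X}\in\mathbb{R}^{d\times n}$ be a matrix with all columns equal to some $\overline{\mathbf{x}}\in\mathbb{R}^d$, let $\xi = (\xi_1,\dots,\xi_n)$ with $\xi_i\sim\mathcal{D}_i$ independent, and let $W^*(\xi)\in\mathcal{M}_w$ be any mixing matrix (possibly depending on $\xi$). Assume $\frac1n\sum_{i=1}^n\mathbb{E}_{\xi_i}\|\nabla F_i(\mathbf{x},\xi_i) - \nabla f_i(\mathbf{x})\|^2\leq\sigma^2$ for all $\mathbf{x}$. Then $$\mathbb{E}\big\|(\partial f(\overline{X}) - \overline{\partial f}(\overline{X}))W^*(\xi)\big\|_F^2 \leq 2\,\mathbb{E}\big\|(\partial f(\overline{X},\xi) - \overline{\partial f}(\overline{X},\xi))W^*(\xi)\big\|_F^2 + 2n\sigma^2.$$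
   Context: $f_i(\mathbf{x}) = \mathbb{E}_{\xi\sim\mathcal{D}_i}F_i(\mathbf{x},\xi)$. For $X = [\mathbf{x}_1,\dots,\mathbf{x}_n]$: $\partial f(X) = [\nabla f_1(\mathbf{x}_1),\dots,\nabla f_n(\mathbf{x}_n)]$, $\partial f(X,\xi) = [\nabla F_1(\mathbf{x}_1,\xi_1),\dots,\nabla F_n(\mathbf{x}_n,\xi_n)]$, and for any $Y\in\mathbb{R}^{d\times n}$, $\overline{Y} = Y\frac{\mathbf{1}\mathbf{1}^\top}{n}$ (so $\overline{\partial f}(X) = \partial f(X)\frac{\mathbf{1}\mathbf{1}^\top}{n}$, $\overline{\partial f}(X,\xi) = \partial f(X,\xi)\frac{\mathbf{1}\mathbf{1}^\top}{n}$). Given a graph $G=(V,E)$ on $n$ nodes, $\mathcal{M}_w = \{W\in\mathbb{R}^{n\times n}: W\mathbf{1} = \mathbf{1},\ \mathbf{1}^\top W = \mathbf{1}^\top,\ 0\le w_{ij}\le1,\ w_{ij}=0\ \forall(i,j)\notin E\}$. Expectations are over $\xi$. *)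

(* Defs.v *)
From HB Require Import structures.
From mathcomp Require Import all_boot all_order all_algebra.
From mathcomp Require Import all_classical all_reals all_analysis.
Set Implicit Arguments. Unset Strict Implicit. Unset Printing Implicit Defensive.
Import Order.TTheory GRing.Theory Num.Theory.
Local Open Scope ring_scope.
Local Open Scope classical_set_scope.

Definition sqnorm (R : realType) (d : nat) (v : 'cV[R]_d) : R :=
  \sum_(j < d) v j 0 ^+ 2.

Definition sqfrob (R : realType) (m k : nat) (M : 'M[R]_(m, k)) : R :=
  \sum_(i < m) \sum_(j < k) M i j ^+ 2.

Definition mean_mx (R : realType) (d n : nat) (Y : 'M[R]_(d, n)) : 'M[R]_(d, n) :=
  Y *m const_mx (n%:R^-1).

Definition rep_col (R : realType) (d n : nat) (x : 'cV[R]_d) : 'M[R]_(d, n) :=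
  \matrix_(j < d, i < n) x j 0.

Definition dgrad (R : realType) (d n : nat) (g : 'I_n -> 'cV[R]_d -> 'cV[R]_d)
  (X : 'M[R]_(d, n)) : 'M[R]_(d, n) :=
  \matrix_(j < d, i < n) (g i (col i X)) j 0.

Definition sgrad (R : realType) (T : Type) (d n : nat)
  (G : 'I_n -> 'cV[R]_d -> T -> 'cV[R]_d) (X : 'M[R]_(d, n)) (xi : 'I_n -> T)
  : 'M[R]_(d, n) :=
  \matrix_(j < d, i < n) (G i (col i X) (xi i)) j 0.

Definition mixing_set (R : realType) (n : nat) (E : rel 'I_n) : set 'M[R]_n :=
  [set W | W *m (const_mx 1 : 'cV[R]_n) = const_mx 1 /\
           (const_mx 1 : 'rV[R]_n) *m W = const_mx 1 /\
           (forall i j, 0 <= W i j <= 1) /\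
           (forall i j, ~~ E i j -> W i j = 0)].

Definition mutually_independent (dO dT : measure_display) (R : realType)
  (Omega : measurableType dO) (T : measurableType dT) (P : probability Omega R)
  (n : nat) (xi : 'I_n -> Omega -> T) : Prop :=
  forall A : 'I_n -> set T, (forall i, measurable (A i)) ->
    P (\bigcap_(i in [set: 'I_n]) (xi i @^-1` A i)) =
    (\prod_(i < n) P (xi i @^-1` A i))%E.

(* Main.v *)
Require Import Defs.
From HB Require Import structures.
From mathcomp Require Import all_boot all_order all_algebra.
From mathcomp Require Import all_classical all_reals all_analysis.
From mathcomp Require Import measurable_realfun.
From mathcomp Require Import ring lra.
Import Order.TTheory GRing.Theory Num.Theory.
Set Implicit Arguments. Unset Strict Implicit. Unset Printing Implicit Defensive.
Local Open Scope ring_scope.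

Lemma zid (R : comRingType) p q (a b c e : 'M[R]_(p,q)) :
  a - b = (c - e) - ((c - a) - (e - b)).
Proof. apply/matrixP => i j; rewrite !mxE; ring. Qed.

Lemma sqfrob_ge0 (R : realType) p q (X : 'M[R]_(p,q)) : 0 <= sqfrob X.
Proof. by apply: sumr_ge0 => i _; apply: sumr_ge0 => j _; apply: sqr_ge0. Qed.

Lemma sqfrob_sub (R : realType) p q (X Y : 'M[R]_(p,q)) :
  sqfrob (X - Y) <= 2 * sqfrob X + 2 * sqfrob Y.
Proof.
rewrite /sqfrob !mulr_sumr -big_split /=; apply: ler_sum => i _.
rewrite !mulr_sumr -big_split /=; apply: ler_sum => j _; rewrite !mxE.
have := sqr_ge0 (X i j + Y i j); rewrite !expr2; nra.
Qed.

Lemma cs_step (R : realType) n (a u : 'I_n -> R) :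
  (forall k, 0 <= a k) -> \sum_k a k = 1 ->
  (\sum_k u k * a k) ^+ 2 <= \sum_k a k * u k ^+ 2.
Proof.
move=> a0 a1; set s := \sum_k u k * a k.
have H0 : 0 <= \sum_k a k * (u k - s) ^+ 2.
  by apply: sumr_ge0 => k _; apply: mulr_ge0 => //; apply: sqr_ge0.
have E : \sum_k a k * (u k - s) ^+ 2 =
   \sum_k a k * u k ^+ 2 - (2 * s) * s + s ^+ 2 * \sum_k a k.
  transitivity (\sum_k (a k * u k ^+ 2 - (2 * s) * (u k * a k) + s ^+ 2 * a k)).
    by apply: eq_bigr => k _; ring.
  by rewrite big_split sumrB /= -!mulr_sumr.
rewrite E a1 in H0; nra.
Qed.

Lemma row_bound (R : realType) n (v : 'I_n -> R) (W : 'M[R]_n) :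
  (forall i j, 0 <= W i j) -> (forall k, \sum_c W k c = 1) ->
  (forall c, \sum_k W k c = 1) ->
  \sum_c (\sum_k (v k - \sum_l v l * n%:R^-1) * W k c) ^+ 2 <= \sum_k v k ^+ 2.
Proof.
move=> W0 Wr Wc; set m := \sum_l v l * n%:R^-1.
apply: (@le_trans _ _ (\sum_c \sum_k W k c * (v k - m) ^+ 2)).
  by apply: ler_sum => c _; apply: cs_step.
rewrite exchange_big /=.
apply: (@le_trans _ _ (\sum_k (v k - m) ^+ 2)).
  by under eq_bigr => k _ do rewrite -mulr_suml Wr mul1r.
have [n0|npos] := eqVneq n 0%N.
  rewrite big1; first by apply: sumr_ge0 => k _; apply: sqr_ge0.
  by case=> i hi; exfalso; rewrite n0 in hi.
have E : \sum_k (v k - m) ^+ 2 =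
   \sum_k v k ^+ 2 - (2 * m) * \sum_k v k + n%:R * m ^+ 2.
  transitivity (\sum_k (v k ^+ 2 - (2 * m) * v k + m ^+ 2)).
    by apply: eq_bigr => k _; ring.
  by rewrite big_split sumrB /= -mulr_sumr sumr_const card_ord (mulr_natl (m ^+ 2) n).
have Hm : n%:R * m = \sum_k v k.
  rewrite /m -mulr_suml mulrC -mulrA mulVf ?mulr1 //.
  by rewrite pnatr_eq0.
rewrite E -Hm.
have := mulr_ge0 (ler0n R n) (sqr_ge0 m); nra.
Qed.

Lemma mean_bound (R : realType) d n (N : 'M[R]_(d, n)) (W : 'M[R]_n) :
  (forall i j, 0 <= W i j) -> (forall k, \sum_c W k c = 1) ->
  (forall c, \sum_k W k c = 1) ->
  sqfrob ((N - mean_mx N) *m W) <= sqfrob N.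
Proof.
move=> W0 Wr Wc; rewrite /sqfrob; apply: ler_sum => r _.
have -> : \sum_c ((N - mean_mx N) *m W) r c ^+ 2 =
   \sum_c (\sum_k (N r k - \sum_l N r l * n%:R^-1) * W k c) ^+ 2.
  apply: eq_bigr => c _; rewrite !mxE; congr (_ ^+ 2); apply: eq_bigr => k _.
  rewrite !mxE; congr ((_ - _) * _).
  by apply: eq_bigr => l _; rewrite mxE.
exact: (@row_bound R n (fun k => N r k) W).
Qed.

Lemma key (R : realType) d n (D S : 'M[R]_(d, n)) (W : 'M[R]_n) :
  (forall i j, 0 <= W i j) -> (forall k, \sum_c W k c = 1) ->
  (forall c, \sum_k W k c = 1) ->
  sqfrob ((D - mean_mx D) *m W) <=
  2 * sqfrob ((S - mean_mx S) *m W) + 2 * sqfrob (S - D).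
Proof.
move=> W0 Wr Wc.
have -> : (D - mean_mx D) *m W =
    (S - mean_mx S) *m W - ((S - D) - mean_mx (S - D)) *m W.
  by rewrite /mean_mx !mulmxBl; apply: zid.
apply: (le_trans (sqfrob_sub _ _)).
by rewrite lerD2l ler_pM2l ?ltr0n //; apply: mean_bound.
Qed.

Definition mxm (R : realType) (dO : measure_display) (Omega : measurableType dO)
  p q (M : Omega -> 'M[R]_(p, q)) :=
  forall i j, measurable_fun setT (fun w => M w i j).

Lemma mxmB (R : realType) (dO : measure_display) (Omega : measurableType dO) p q
  (M1 M2 : Omega -> 'M[R]_(p, q)) :
  mxm M1 -> mxm M2 -> mxm (fun w => M1 w - M2 w).
Proof.
move=> h1 h2 i j.
rewrite (_ : (fun w => (M1 w - M2 w) i j) = (fun w => M1 w i j - M2 w i j)).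
  exact: measurable_funB.
by apply/funext => w; rewrite !mxE.
Qed.

Lemma mxmM (R : realType) (dO : measure_display) (Omega : measurableType dO) p q r
  (M1 : Omega -> 'M[R]_(p, q)) (M2 : Omega -> 'M[R]_(q, r)) :
  mxm M1 -> mxm M2 -> mxm (fun w => M1 w *m M2 w).
Proof.
move=> h1 h2 i j.
rewrite (_ : (fun w => (M1 w *m M2 w) i j) = (fun w => \sum_k (M1 w i k * M2 w k j))).
  by apply: measurable_sum => k; apply: measurable_funM.
by apply/funext => w; rewrite !mxE.
Qed.

Lemma mxmC (R : realType) (dO : measure_display) (Omega : measurableType dO) p q
  (C : 'M[R]_(p, q)) : mxm (fun _ : Omega => C).
Proof. by move=> i j; apply: measurable_cst. Qed.

Lemma sqfrob_meas (R : realType) (dO : measure_display) (Omega : measurableType dO) p q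
  (M : Omega -> 'M[R]_(p, q)) :
  mxm M -> measurable_fun setT (fun w => sqfrob (M w)).
Proof.
move=> hM; rewrite /sqfrob.
apply: measurable_sum => i; apply: measurable_sum => j.
exact: measurable_funX.
Qed.

Lemma col_rep (R : realType) d n (x : 'cV[R]_d) (i : 'I_n) :
  col i (rep_col n x) = x.
Proof. by apply/matrixP => j k; rewrite !mxE (ord1 k). Qed.

Local Open Scope classical_set_scope.
Unset Implicit Arguments.

Theorem proposition2 (R : realType) (dO dT : measure_display)
  (Omega : measurableType dO) (T : measurableType dT) (P : probability Omega R)
  (d n : nat) (E : rel 'I_n)
  (xi : 'I_n -> Omega -> T)
  (G : 'I_n -> 'cV[R]_d -> T -> 'cV[R]_d)
  (g : 'I_n -> 'cV[R]_d -> 'cV[R]_d)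
  (W : Omega -> 'M[R]_n) (sigma : R) (xbar : 'cV[R]_d) :
  (forall i, measurable_fun setT (xi i)) ->
  mutually_independent P xi ->
  (forall i x j, measurable_fun setT (fun t => G i x t j 0)) ->
  (forall i j, measurable_fun setT (fun w => W w i j)) ->
  (forall w, mixing_set E (W w)) ->
  (forall x : 'cV[R]_d,
     ((n%:R^-1)%:E * \sum_(i < n) \int[P]_w (sqnorm (G i x (xi i w) - g i x))%:E
       <= (sigma ^+ 2)%:E)%E) ->
  let Xb : 'M[R]_(d, n) := rep_col n xbar in
  (\int[P]_w (sqfrob ((dgrad g Xb - mean_mx (dgrad g Xb)) *m W w))%:E
   <= 2%:E * \int[P]_w
        (sqfrob ((sgrad G Xb (fun i => xi i w) - mean_mx (sgrad G Xb (fun i => xi i w)))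
                 *m W w))%:E
      + (2 * n%:R * sigma ^+ 2)%:E)%E.
Proof.
move=> hxi _ hG hW hmix hsig; cbv zeta; set Xb := rep_col n xbar.
set fA := fun w => sqfrob ((dgrad g Xb - mean_mx (dgrad g Xb)) *m W w).
set fB := fun w => sqfrob ((sgrad G Xb (fun i => xi i w)
                  - mean_mx (sgrad G Xb (fun i => xi i w))) *m W w).
set h := fun i w => sqnorm (G i xbar (xi i w) - g i xbar).
have mSw : mxm (fun w => sgrad G Xb (fun i => xi i w)).
  move=> j i.
  rewrite (_ : (fun w => sgrad G Xb (fun i => xi i w) j i) =
               (fun t => G i (col i Xb) t j 0) \o xi i).
    exact: measurableT_comp.
  by apply/funext => w; rewrite !mxE.
have mA : measurable_fun setT fA.
  apply: (sqfrob_meas (M := fun w => (dgrad g Xb - mean_mx (dgrad g Xb)) *m W w)).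
  by apply: mxmM => //; apply: mxmC.
have mB : measurable_fun setT fB.
  apply: (sqfrob_meas (M := fun w => (sgrad G Xb (fun i => xi i w)
                  - mean_mx (sgrad G Xb (fun i => xi i w))) *m W w)).
  apply: mxmM => //; apply: mxmB => //; rewrite /mean_mx.
  by apply: (mxmM (M1 := fun w => sgrad G Xb (fun i => xi i w))) => //; apply: mxmC.
have mh : forall i, measurable_fun setT (h i).
  move=> i; rewrite /h /sqnorm.
  apply: measurable_sum => j.
  apply: measurable_funX.
  rewrite (_ : (fun w => (G i xbar (xi i w) - g i xbar) j 0) =
     ((fun t => G i xbar t j 0) \o xi i) \- (fun _ => g i xbar j 0)).
    apply: measurable_funB; last exact: measurable_cst.
    exact: measurableT_comp.
  by apply/funext => w; rewrite !mxE.
have hpt : forall w, fA w <= 2 * fB w + 2 * \sum_i h i w.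
  move=> w; have [r1 [c1 [nn _]]] := hmix w.
  have Hr : forall k, \sum_c W w k c = 1.
    move=> k; have := congr1 (fun M : 'M[R]_(n,1) => M k ord0) r1; rewrite /= !mxE => H.
    rewrite -[RHS]H; apply: eq_bigr => c _; by rewrite mxE mulr1.
  have Hc : forall c, \sum_k W w k c = 1.
    move=> c; have := congr1 (fun M : 'M[R]_(1,n) => M ord0 c) c1; rewrite /= !mxE => H.
    rewrite -[RHS]H; apply: eq_bigr => k _; by rewrite mxE mul1r.
  have H0 : forall i j, 0 <= W w i j by move=> i j; have /andP[] := nn i j.
  have -> : \sum_i h i w = sqfrob (sgrad G Xb (fun i => xi i w) - dgrad g Xb).
    rewrite /h /sqfrob /sqnorm exchange_big /=.
    apply: eq_bigr => i _; apply: eq_bigr => j _.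
    by rewrite !mxE /Xb col_rep.
  exact: key.
apply: (@le_trans _ _ (\int[P]_w (2 * fB w + 2 * \sum_i h i w)%:E)%E).
  apply: ge0_le_integral => //.
  - by move=> w _; rewrite lee_fin; apply: sqfrob_ge0.
  - by apply/measurable_EFinP.
  - apply/measurable_EFinP; apply: measurable_funD.
      by apply: measurable_funM; [exact: measurable_cst | exact: mB].
    apply: measurable_funM; first exact: measurable_cst.
    exact: measurable_sum.
  - by move=> w _; rewrite lee_fin; apply: hpt.
have h0 : forall i w, 0 <= h i w.
  by move=> i w; apply: sumr_ge0 => j _; apply: sqr_ge0.
have mhE : forall i, measurable_fun setT (fun w => (h i w)%:E).
  by move=> i; apply/measurable_EFinP.
rewrite (@eq_integral _ _ _ _ _ (fun w => (2 * fB w)%:E + (2 * \sum_i h i w)%:E)%E);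
  last by move=> w _; rewrite EFinD.
rewrite ge0_integralD //; first last.
- apply/measurable_EFinP; apply: measurable_funM; first exact: measurable_cst.
  exact: measurable_sum.
- by move=> w _; rewrite lee_fin; apply: mulr_ge0 => //; apply: sumr_ge0.
- apply/measurable_EFinP; apply: measurable_funM; first exact: measurable_cst.
  exact: mB.
- by move=> w _; rewrite lee_fin; apply: mulr_ge0 => //; apply: sqfrob_ge0.
rewrite (@eq_integral _ _ _ _ _ (fun w => 2%:E * (fB w)%:E)%E);
  last by move=> w _; rewrite EFinM.
rewrite ge0_integralZl_EFin //; first last.
- by apply/measurable_EFinP.
- by move=> w _; rewrite lee_fin; apply: sqfrob_ge0.
apply: leeD2l.
rewrite (@eq_integral _ _ _ _ _ (fun w => 2%:E * (\sum_i h i w)%:E)%E);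
  last by move=> w _; rewrite EFinM.
rewrite ge0_integralZl_EFin //; first last.
- by apply/measurable_EFinP; exact: measurable_sum.
- by move=> w _; rewrite lee_fin; apply: sumr_ge0.
rewrite (@eq_integral _ _ _ _ _ (fun w => \sum_(i < n) (h i w)%:E)%E);
  last by move=> w _; rewrite sumEFin.
rewrite ge0_integral_sum //; last by move=> i w _; rewrite lee_fin.
have hs := hsig xbar.
set X := (\sum_(i < n) \int[P]_w (h i w)%:E)%E.
have X0 : (0 <= X)%E.
  by apply: sume_ge0 => i _; apply: integral_ge0 => w _; rewrite lee_fin.
have [n0|npos] := eqVneq n 0%N.
  have -> : X = 0%E.
    by apply: big1; case=> i hi _; exfalso; rewrite n0 in hi.
  by rewrite mule0 lee_fin n0 mulr0 mul0r.
have hs' : ((n%:R^-1)%:E * X <= (sigma ^+ 2)%:E)%E by exact: hs.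
move: X0 hs'; case: X => [x| |] //.
- rewrite -EFinM !lee_fin => x0 hx.
  have := ler_wpM2l (ler0n R n) hx.
  rewrite mulrA mulfV ?mul1r ?pnatr_eq0 // => hx2.
  have := ler0n R n; nra.
- move=> _; rewrite muleC gt0_mulye ?lte_fin ?invr_gt0 ?ltr0n ?lt0n //.
Qed.
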